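(* Let $M$ be a holomorphic hypersurface of a Kähler manifold with Norden metric $(M',g,J)$ of dimension $2n+2$, and let $p\in M$. If at $p$ one has $\sigma(x,y)=g(x,y)H-\tilde g(x,y)JH$ for all $x,y\in T_pM$, then $M$ is h-umbilical at $p$ with respect to every vector $\eta$ normal to $M$ at $p$, i.e. $$A_\eta=\frac{\operatorname{trace}A_\eta}{2n}\,I-\frac{\operatorname{trace}(A_\eta\circ J)}{2n}\,J.$$
   Context: A Kähler manifold with Norden metric: manifold $M'$ with almost complex structure $J$, pseudo-Riemannian metric $g$ with $g(JX,JY)=-g(X,Y)$ and $\nabla'J=0$; $\tilde g(X,Y)=g(JX,Y)$. A holomorphic hypersurface is a $2n$-dimensional submanifold $M$ with $J(T_pM)=T_pM$ and $g|_{T_pM}$ nondegenerate, with induced Levi-Civita connection $\nabla$; its second fundamental form $\sigma$ is defined by $\nabla'_XY=\nabla_XY+\sigma(X,Y)$ and its mean curvature vector is $H=\frac1{2n}\operatorname{trace}_g\sigma$. For a vector $\eta$ normal to $M$ at $p$, $A_\eta$ is the endomorphism of $T_pM$ with $g(A_\eta x,y)=g(\sigma(x,y),\eta)$; $I$ is the identity. *)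

(* Defs.v *)
(* Pointwise (linear-algebra) model of the situation at p. *)
From HB Require Import structures.
From mathcomp Require Import all_boot all_order all_algebra.
Set Implicit Arguments. Unset Strict Implicit. Unset Printing Implicit Defensive.
Import Order.TTheory GRing.Theory Num.Theory.
Local Open Scope ring_scope.

(* Vectors of T_pM' are row vectors 'rV_k (coordinates in a fixed basis);
   a linear endomorphism F acts by x |-> x *m F.
   The metric g at p is given by its Gram matrix G: g(x,y) = x G y^T. *)
Definition gform {R : ringType} {k : nat} (G : 'M[R]_k) (x y : 'rV[R]_k) : R :=
  (x *m G *m y^T) 0 0.

Definition gtilde {R : ringType} {k : nat} (G J : 'M[R]_k) (x y : 'rV[R]_k) : R :=
  gform G (x *m J) y.

(* The tangent space T_pM is the row space of a row-free matrix B whose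
   rows form a basis of T_pM.  Gram matrix of g|_{T_pM} in that basis. *)
Definition gram {R : ringType} {m k : nat} (G : 'M[R]_k) (B : 'M[R]_(m, k))
  : 'M[R]_m := B *m G *m B^T.

Definition mean_curv {R : fieldType} {m k : nat} (G : 'M[R]_k) (B : 'M[R]_(m, k))
  (sigma : 'rV[R]_k -> 'rV[R]_k -> 'rV[R]_k) : 'rV[R]_k :=
  (m%:R)^-1 *: \sum_(i < m) \sum_(j < m)
     (invmx (gram G B)) i j *: sigma (row i B) (row j B).

(* Matrix (in the basis B, row convention) of the shape operator A_eta:
   the endomorphism of T_pM with g(A_eta x, y) = g(sigma(x,y), eta). *)
Definition shape_op {R : fieldType} {m k : nat} (G : 'M[R]_k) (B : 'M[R]_(m, k))
  (sigma : 'rV[R]_k -> 'rV[R]_k -> 'rV[R]_k) (eta : 'rV[R]_k) : 'M[R]_m :=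
  (\matrix_(i < m, j < m) gform G (sigma (row i B) (row j B)) eta)
    *m invmx (gram G B).

(* Matrix (in the basis B) of the restriction J|_{T_pM}: rows of B *m J
   expressed in the basis B. *)
Definition restr_mx {R : fieldType} {m k : nat} (B : 'M[R]_(m, k)) (F : 'M[R]_k)
  : 'M[R]_m := (B *m F) *m pinvmx B.

(* Main.v *)
Require Import Defs.
From HB Require Import structures.
From mathcomp Require Import all_boot all_order all_algebra.
Import Order.TTheory GRing.Theory Num.Theory.
Local Open Scope ring_scope.

Theorem lemma2p4 (R : realFieldType) (n : nat) (n_gt0 : (0 < n)%N)
  (* the metric g and almost complex structure J of M' at p, dim M' = 2n+2 *)
  (G J : 'M[R]_(2 * n + 2))
  (G_sym : G^T = G) (G_nondeg : G \in unitmx)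
  (J2 : J *m J = - 1%:M)
  (Norden : forall x y, gform G (x *m J) (y *m J) = - gform G x y)
  (* T_pM : row space of B (a basis), J-invariant, g|T_pM nondegenerate *)
  (B : 'M[R]_(2 * n, 2 * n + 2))
  (B_free : row_free B)
  (B_hol : (B *m J <= B)%MS)
  (B_nondeg : gram G B \in unitmx)
  (* the second fundamental form at p: symmetric, normal-valued *)
  (sigma : 'rV[R]_(2 * n + 2) -> 'rV[R]_(2 * n + 2) -> 'rV[R]_(2 * n + 2))
  (sigma_sym : forall x y, (x <= B)%MS -> (y <= B)%MS -> sigma x y = sigma y x)
  (sigma_normal : forall x y z, (x <= B)%MS -> (y <= B)%MS -> (z <= B)%MS ->
      gform G (sigma x y) z = 0)
  (* the mean curvature vector at p *)
  (H : 'rV[R]_(2 * n + 2)) (H_def : H = mean_curv G B sigma)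
  (* the hypothesis at p *)
  (Hsigma : forall x y, (x <= B)%MS -> (y <= B)%MS ->
      sigma x y = gform G x y *: H - gtilde G J x y *: (H *m J))
  (* any normal vector eta at p *)
  (eta : 'rV[R]_(2 * n + 2))
  (eta_normal : forall z, (z <= B)%MS -> gform G z eta = 0) :
  let A := shape_op G B sigma eta in
  let JM := restr_mx B J in
  A = ((2 * n)%:R^-1 * \tr A) %:M - ((2 * n)%:R^-1 * \tr (JM *m A)) *: JM.
Proof.
move=> A JM.
set m := (2 * n)%N.
set Gam := gram G B.
set T := B *m J *m G *m B^T.
have entry : forall (p q r : nat) (X : 'M[R]_(p, r)) (Y : 'M[R]_r) (Z : 'M[R]_(q, r)) i j,
    gform Y (row i X) (row j Z) = (X *m Y *m Z^T) i j.
  move=> p q r X Y Z i j; rewrite /gform -!row_mul !mxE.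
  by apply: eq_bigr => k _; rewrite !mxE.
have gformL : forall a (u v w : 'rV[R]_(2*n+2)),
    gform G (a *: u + v) w = a * gform G u w + gform G v w.
  by move=> a u v w; rewrite /gform !mulmxDl -!scalemxAl !mxE.
have gformB : forall a b (u v w : 'rV[R]_(2*n+2)),
    gform G (a *: u - b *: v) w = a * gform G u w - b * gform G v w.
  by move=> a b u v w; rewrite /gform !mulmxBl -!scalemxAl !mxE.
have GamT : Gam^T = Gam by rewrite /Gam /gram !trmx_mul trmxK G_sym mulmxA.
have JMB : JM *m B = B *m J by rewrite /JM /restr_mx mulmxKpV.
have JMGam : JM *m Gam = T by rewrite /Gam /gram /T !mulmxA JMB.
have JM2 : JM *m JM = - 1%:M.
  apply: (row_free_inj B_free); rewrite /= -mulmxA JMB mulmxA JMB -mulmxA J2.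
  by rewrite mulmxN mulmx1 mulNmx mul1mx.
set h1 := gform G H eta.
set h2 := gform G (H *m J) eta.
have Sdef : \matrix_(i < m, j < m) gform G (sigma (row i B) (row j B)) eta
    = h1 *: Gam - h2 *: T.
  apply/matrixP => i j; rewrite !mxE Hsigma ?row_sub //.
  rewrite gformB /gtilde -row_mul !entry !mxE -/h1 -/h2.
  by rewrite mulrC [_ * h2]mulrC.
have Adef : A = h1 *: 1%:M - h2 *: JM.
  rewrite /A /shape_op Sdef -JMGam mulmxBl -!scalemxAl mulmxV // -mulmxA mulmxV //.
  by rewrite mulmx1 scalemx1.
have sumtr : forall (X Y : 'M[R]_m),
    \sum_(i < m) \sum_(j < m) X i j * Y i j = \tr (X *m Y^T).
  move=> X Y; rewrite /mxtrace; apply: eq_bigr => i _; rewrite mxE.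
  by apply: eq_bigr => j _; rewrite mxE.
set t := \tr JM.
have m0 : (m%:R : R) != 0 by rewrite pnatr_eq0 /m muln_eq0 negb_or /= -lt0n n_gt0.
have eqH : H = H - (m%:R^-1 * t) *: (H *m J).
  rewrite {1}H_def /mean_curv.
  have -> : \sum_(i < m) \sum_(j < m) invmx Gam i j *: sigma (row i B) (row j B)
      = (\sum_(i < m) \sum_(j < m) invmx Gam i j * Gam i j) *: H
        - (\sum_(i < m) \sum_(j < m) invmx Gam i j * T i j) *: (H *m J).
    rewrite !scaler_suml -sumrB; apply: eq_bigr => i _.
    rewrite !scaler_suml -sumrB; apply: eq_bigr => j _.
    rewrite Hsigma ?row_sub // scalerBr !scalerA /gtilde -row_mul !entry.
    by rewrite /Gam /gram /T.
  rewrite !sumtr GamT mulVmx // mxtrace1.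
  have -> : \tr (invmx Gam *m T^T) = t.
    rewrite -mxtrace_tr trmx_mul trmxK trmx_inv GamT -JMGam -mulmxA mulmxV //.
    by rewrite mulmx1.
  by rewrite scalerBr !scalerA mulVf // scale1r.
have key : (m%:R^-1 * t) *: (H *m J) = 0.
  have := congr1 (fun v => H - v) eqH.
  by rewrite /= subrr opprB addrC subrK => <-.
have trA : \tr A = h1 * m%:R - h2 * t.
  by rewrite Adef linearB /= !mxtraceZ mxtrace1.
have trJA : \tr (JM *m A) = h1 * t + h2 * m%:R.
  rewrite Adef mulmxBr -!scalemxAr mulmx1 JM2 linearB /= !mxtraceZ.
  by rewrite linearN /= mxtrace1 mulrN opprK.
have [t0|tn0] := eqVneq t 0.
  rewrite trA trJA t0 !mulr0 subr0 add0r ![_ * (_ * _)]mulrC.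
  by rewrite -!mulrA mulfV // !mulr1 Adef scalemx1.
have HJ0 : H *m J = 0.
  by move/eqP: key; rewrite scaler_eq0 mulf_eq0 invr_eq0 (negbTE m0) (negbTE tn0) => /eqP.
have H0 : H = 0 by rewrite -[H]mulmx1 -[1%:M]opprK -J2 mulmxN mulmxA HJ0 mul0mx oppr0.
have h10 : h1 = 0 by rewrite /h1 H0 /gform !mul0mx mxE.
have h20 : h2 = 0 by rewrite /h2 HJ0 /gform !mul0mx mxE.
rewrite trA trJA Adef h10 h20 !(mul0r, mulr0, subr0, addr0, scale0r).
by rewrite -scalemx1 scale0r.
Qed.
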